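(* Let $0<q<1$, $0\le p<1$, and let $\tilde P_n(x)=\sum_{k=0}^n\tilde b_{k,n}x^k$ be the orthonormal polynomials (positive leading coefficients) for the moment sequence $(\tilde s_n)$. The monic polynomials $\tilde p_n=\tilde P_n/\tilde b_{n,n}$ satisfy $\tilde p_n(x)=(x-\tilde c_n)\tilde p_{n-1}(x)-\tilde\lambda_n\tilde p_{n-2}(x)$ for $n\ge1$ ($\tilde p_{-1}=0$, $\tilde p_0=1$), where \[ \tilde c_1=\frac{(p;q)_\infty}{\Delta_1}q^{-3/2}, \] and for $n\ge1$ \[ \tilde c_{n+1}=\bigl[(1-q^{n+1})(pq^n;q)_\infty-(1-pq^{n+1})(q^n;q)_\infty\bigr]\frac{q^{-2n-3/2}}{(1-q)\Delta_{n+1}} -\bigl[(1-q^{n})(pq^{n-1};q)_\infty-(1-pq^{n})(q^{n-1};q)_\infty\bigr]\frac{q^{-2n+1/2}}{(1-q)\Delta_n}, \] \[ \tilde\lambda_{n+1}=\frac{\Delta_{n-1}\Delta_{n+1}}{\Delta_{n}^2}(1-q^{n})(1-pq^{n})q^{-4n}. \]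
   Context: For $a\in\mathbb C$ and $n\in\{0,1,\dots\}\cup\{\infty\}$, $(a;q)_n=\prod_{k=1}^n(1-aq^{k-1})$. Set $\Delta_n=(pq^n;q)_\infty-(q^n;q)_\infty$ for $n\ge0$. The moment sequence is $\tilde s_0=q^{-1/2}\bigl[1-(q;q)_\infty/(pq;q)_\infty\bigr]$ and $\tilde s_n=(p;q)_nq^{-(n+1)^2/2}$ for $n\ge1$. *)

(* Defs.v *)
From mathcomp Require Import all_boot all_order all_algebra.
From mathcomp Require Import all_classical all_reals all_analysis.
Set Implicit Arguments. Unset Strict Implicit. Unset Printing Implicit Defensive.
Import Order.TTheory GRing.Theory Num.Theory numFieldNormedType.Exports.
Local Open Scope ring_scope.

Section QDefs.
Variable R : realType.

Definition qpoch (a q : R) (n : nat) : R := \prod_(k < n) (1 - a * q ^+ k).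

Definition qpoch_inf (a q : R) : R := limn (qpoch a q).

Definition Delta (p q : R) (n : nat) : R :=
  qpoch_inf (p * q ^+ n) q - qpoch_inf (q ^+ n) q.

Definition stilde (p q : R) (n : nat) : R :=
  if n is 0 then q `^ (- (1 / 2)) * (1 - qpoch_inf q q / qpoch_inf (p * q) q)
  else qpoch p q n * q `^ (- ((n.+1 ^ 2)%:R / 2)).

Definition Lmom (p q : R) (P : {poly R}) : R :=
  \sum_(i < size P) P`_i * stilde p q i.

(* c~_n for n >= 1 (value at 0 is irrelevant, set to 0) *)
Definition ctilde (p q : R) (n : nat) : R :=
  match n with
  | 0 => 0
  | 1 => qpoch_inf p q / Delta p q 1 * q `^ (- (3 / 2))
  | m.+1 =>
      ((1 - q ^+ m.+1) * qpoch_inf (p * q ^+ m) q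
         - (1 - p * q ^+ m.+1) * qpoch_inf (q ^+ m) q)
        * (q `^ (- (2 * m)%:R - 3 / 2) / ((1 - q) * Delta p q m.+1))
      - ((1 - q ^+ m) * qpoch_inf (p * q ^+ m.-1) q
         - (1 - p * q ^+ m) * qpoch_inf (q ^+ m.-1) q)
        * (q `^ (- (2 * m)%:R + 1 / 2) / ((1 - q) * Delta p q m))
  end.

(* lambda~_n for n >= 2 (lambda~_0, lambda~_1 irrelevant, set to 0) *)
Definition lamtilde (p q : R) (n : nat) : R :=
  match n with
  | 0 | 1 => 0
  | m.+1 => Delta p q m.-1 * Delta p q m.+1 / (Delta p q m) ^+ 2
             * (1 - q ^+ m) * (1 - p * q ^+ m) * q ^- (4 * m)
  end.

(* pair (p~_n, p~_{n+1}) built by the three-term recurrence,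
   with p~_{-1} = 0, p~_0 = 1 *)
Fixpoint ptilde_pair (p q : R) (n : nat) : {poly R} * {poly R} :=
  match n with
  | 0 => (1, 'X - (ctilde p q 1)%:P)
  | n.+1 => let: (a, b) := ptilde_pair p q n in
            (b, ('X - (ctilde p q n.+2)%:P) * b - (lamtilde p q n.+2) *: a)
  end.

Definition ptilde_rec (p q : R) (n : nat) : {poly R} := (ptilde_pair p q n).1.

End QDefs.

(* Main.v *)
Require Import Defs.
From mathcomp Require Import all_boot all_order all_algebra.
From mathcomp Require Import all_classical all_reals all_analysis.
Import Order.TTheory GRing.Theory Num.Theory.
Local Open Scope ring_scope.
From mathcomp Require Import ring lra zify.
Import numFieldNormedType.Exports.

Section Ana.
Context {R : realType}.
Implicit Types (a q : R).

Lemma qpochS a q n : qpoch a q n.+1 = qpoch a q n * (1 - a * q ^+ n).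
Proof. by rewrite /qpoch big_ord_recr. Qed.

Lemma qpoch0 a q : qpoch a q 0 = 1.
Proof. by rewrite /qpoch big_ord0. Qed.

Lemma qpochSl a q n : qpoch a q n.+1 = (1 - a) * qpoch (a * q) q n.
Proof.
rewrite /qpoch big_ord_recl expr0 mulr1; congr (_ * _).
by apply: eq_bigr => i _; rewrite lift0 exprS mulrA.
Qed.

Lemma qpoch_01 a q n : 0 <= a <= 1 -> 0 <= q <= 1 -> 0 <= qpoch a q n <= 1.
Proof.
move=> /andP[a0 a1] /andP[q0 q1]; elim: n => [|n IH]; first by rewrite qpoch0 ler01 lexx.
have h1 : 0 <= a * q ^+ n by rewrite mulr_ge0 // exprn_ge0.
have h2 : a * q ^+ n <= 1 by rewrite mulr_ile1 // ?exprn_ge0 // exprn_ile1.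
case/andP: IH => I0 I1.
rewrite qpochS; apply/andP; split.
  by rewrite mulr_ge0 // subr_ge0.
by rewrite mulr_ile1 // ?subr_ge0 // lerBlDr lerDl.
Qed.

Lemma qpoch_cvg a q : 0 <= a <= 1 -> 0 <= q <= 1 -> cvgn (qpoch a q).
Proof.
move=> ha hq; apply: nonincreasing_is_cvgn.
  apply/nonincreasing_seqP => n; rewrite qpochS.
  have /andP[I0 I1] := qpoch_01 _ _ n ha hq.
  case/andP: ha => a0 a1; case/andP: hq => q0 q1.
  have h1 : 0 <= a * q ^+ n by rewrite mulr_ge0 // exprn_ge0.
  by rewrite ler_piMr // lerBlDr lerDl.
exists 0 => y [n _ <-]; by case/andP: (qpoch_01 _ _ n ha hq).
Qed.

Lemma qpoch_inf_shift a q : 0 <= a <= 1 -> 0 <= q <= 1 ->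
  qpoch_inf a q = (1 - a) * qpoch_inf (a * q) q.
Proof.
move=> ha hq.
have haq : 0 <= a * q <= 1.
  case/andP: ha => a0 a1; case/andP: hq => q0 q1.
  by rewrite mulr_ge0 // mulr_ile1.
rewrite /qpoch_inf; apply: cvg_lim => //.
rewrite -cvg_shiftS /=.
have -> : (fun n => qpoch a q n.+1) = (fun n => (1 - a) * qpoch (a * q) q n).
  by apply: funext => n; rewrite qpochSl.
by apply: cvgMl_tmp; exact: qpoch_cvg.
Qed.

Lemma qpoch_lb a q n : 0 <= a <= 1 -> 0 <= q < 1 ->
  1 - a / (1 - q) <= qpoch a q n.
Proof.
move=> ha /andP[q0 q1].
have hq : 0 <= q <= 1 by rewrite q0 ltW.
have q1' : 0 < 1 - q by rewrite subr_gt0.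
case/andP: (ha) => a0 a1.
suff H : 1 - a * (1 - q ^+ n) / (1 - q) <= qpoch a q n.
  apply: le_trans H; rewrite lerD2l lerN2 ler_pM2r ?invr_gt0 //.
  by rewrite ler_piMr // lerBlDr lerDl exprn_ge0.
elim: n => [|n IH]; first by rewrite expr0 subrr mulr0 mul0r subr0 qpoch0.
rewrite qpochS.
have /andP[I0 I1] := qpoch_01 _ _ n ha hq.
have h1 : 0 <= a * q ^+ n by rewrite mulr_ge0 // exprn_ge0.
have E : 1 - a * (1 - q ^+ n.+1) / (1 - q) = 1 - a * (1 - q ^+ n) / (1 - q) - a * q ^+ n.
  rewrite exprS; field; by rewrite subr_eq0 gt_eqF.
rewrite E [qpoch _ _ _ * _]mulrBr mulr1; apply: lerD => //.
by rewrite lerN2 ler_piMl.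
Qed.

Lemma qpoch_inf_lb a q : 0 <= a <= 1 -> 0 <= q < 1 ->
  1 - a / (1 - q) <= qpoch_inf a q.
Proof.
move=> ha hq; have hq' : 0 <= q <= 1 by case/andP: hq => -> /ltW ->.
apply: limr_ge; first exact: qpoch_cvg.
by near=> n; apply: qpoch_lb.
Unshelve. all: end_near.
Qed.


Lemma qpoch_inf_shiftn a q N : 0 <= a <= 1 -> 0 <= q <= 1 ->
  qpoch_inf a q = qpoch a q N * qpoch_inf (a * q ^+ N) q.
Proof.
move=> ha hq; elim: N => [|N IH]; first by rewrite qpoch0 mul1r expr0 mulr1.
have haN : 0 <= a * q ^+ N <= 1.
  case/andP: ha => a0 a1; case/andP: hq => q0 q1.
  by rewrite mulr_ge0 ?exprn_ge0 // mulr_ile1 ?exprn_ge0 ?exprn_ile1.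
by rewrite IH qpochS (qpoch_inf_shift _ _ haN hq) exprSr mulrA mulrA.
Qed.

Lemma qpoch_gt0 a q n : 0 <= a < 1 -> 0 <= q <= 1 -> 0 < qpoch a q n.
Proof.
move=> /andP[a0 a1] /andP[q0 q1]; rewrite /qpoch; apply: prodr_gt0 => i _.
rewrite subr_gt0; apply: (le_lt_trans _ a1).
by rewrite ler_piMr ?exprn_ile1.
Qed.

Lemma qpoch_inf_gt0 a q : 0 <= a < 1 -> 0 < q < 1 -> 0 < qpoch_inf a q.
Proof.
move=> ha /andP[q0 q1].
have hq : 0 <= q <= 1 by rewrite ltW // ltW.
have hq' : `|q| < 1 by rewrite ger0_norm ?ltW.
have q1' : 0 < 1 - q by rewrite subr_gt0.
have hpos : 0 < (1 - q) / 2 by rewrite divr_gt0.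
have := cvgr_lt _ (cvg_expr hq') ((1 - q) / 2) hpos.
case => N _ HN; have {HN} HN := HN N (leqnn N); rewrite /= in HN.
case/andP: (ha) => a0 a1.
have ha' : 0 <= a <= 1 by rewrite a0 ltW.
rewrite (qpoch_inf_shiftn _ _ N ha' hq) mulr_gt0 ?qpoch_gt0 //.
have haN : 0 <= a * q ^+ N <= 1.
  apply/andP; split; first by rewrite mulr_ge0 // exprn_ge0 // ltW.
  by rewrite mulr_ile1 // ?exprn_ge0 ?exprn_ile1 // ltW.
apply: (lt_le_trans _ (qpoch_inf_lb _ _ haN _)); last by rewrite ltW.
rewrite subr_gt0 ltr_pdivrMr // mul1r.
apply: (le_lt_trans _ (lt_trans HN _)).
  by rewrite ler_piMl ?exprn_ge0 ?ltW.
by rewrite ltr_pdivrMr // ltr_pMr // ltr1n.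
Qed.

End Ana.

Section Deltas.
Context {R : realType}.
Variables p q : R.
Hypotheses (q0 : 0 < q) (q1 : q < 1) (p0 : 0 <= p) (p1 : p < 1).

Definition U m := qpoch_inf (p * q ^+ m) q.
Definition V m := qpoch_inf (q ^+ m) q.

Lemma hq01 : 0 <= q <= 1. Proof. by rewrite !ltW. Qed.

Lemma pqm01 m : 0 <= p * q ^+ m <= 1.
Proof.
apply/andP; split; first by rewrite mulr_ge0 // exprn_ge0 // ltW.
by rewrite mulr_ile1 // ?exprn_ge0 ?exprn_ile1 // ltW.
Qed.

Lemma qm01 m : 0 <= q ^+ m <= 1.
Proof. by rewrite exprn_ge0 ?exprn_ile1 // ltW. Qed.

Lemma U_shift m : U m = (1 - p * q ^+ m) * U m.+1.
Proof. by rewrite /U (qpoch_inf_shift _ _ (pqm01 m) hq01) exprSr mulrA. Qed.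

Lemma V_shift m : V m = (1 - q ^+ m) * V m.+1.
Proof. by rewrite /V (qpoch_inf_shift _ _ (qm01 m) hq01) exprSr. Qed.

Lemma V0 : V 0 = 0.
Proof. by rewrite V_shift expr0 subrr mul0r. Qed.

Lemma U_gt0 m : 0 < U m.
Proof.
apply: qpoch_inf_gt0; last by rewrite q0 q1.
have qq := qm01 m; case/andP: qq => qa qb.
rewrite mulr_ge0 //=.
by apply: (le_lt_trans _ p1); rewrite ler_piMr.
Qed.

Lemma V_gt0 m : 0 < V m.+1.
Proof.
apply: qpoch_inf_gt0; last by rewrite q0 q1.
have qq := qm01 m.+1; case/andP: qq => qa qb.
by rewrite qa /= expr_lt1 // ltW.
Qed.

Lemma V_le_U m : V m <= U m.
Proof.
rewrite /U /V /qpoch_inf; apply: ler_lim.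
- exact: qpoch_cvg _ _ (qm01 m) hq01.
- exact: qpoch_cvg _ _ (pqm01 m) hq01.
near=> n; rewrite /qpoch; apply: ler_prod => i _.
have := qm01 (m + i); rewrite exprD => /andP[h0 h1].
by rewrite subr_ge0 h1 /= lerD2l lerN2 -mulrA ler_piMl // ltW.
Unshelve. all: end_near.
Qed.

Lemma Delta_gt0 m : 0 < Delta p q m.
Proof.
rewrite /Delta -/(U m) -/(V m).
case: m => [|m]; first by rewrite V0 subr0 U_gt0.
rewrite U_shift V_shift.
apply: (lt_le_trans _ (_ : (1 - p * q ^+ m.+1) * V m.+2 - (1 - q ^+ m.+1) * V m.+2 <= _)).
  have -> : (1 - p * q ^+ m.+1) * V m.+2 - (1 - q ^+ m.+1) * V m.+2
     = (1 - p) * q ^+ m.+1 * V m.+2 by ring.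
  by rewrite mulr_gt0 ?V_gt0 // mulr_gt0 ?exprn_gt0 // subr_gt0.
rewrite lerD2r ler_wpM2l ?V_le_U //.
by case/andP: (pqm01 m.+1) => _ h; rewrite subr_ge0.
Qed.

End Deltas.

Section Abs.
Context {R : realType}.
Variables p q : R.
Local Notation L := (Lmom p q).
Local Notation s := (stilde p q).

Lemma LmomE (f : {poly R}) N : (size f <= N)%N ->
  L f = \sum_(i < N) f`_i * s i.
Proof.
move=> hN; rewrite /Lmom (big_ord_widen N (fun i => f`_i * s i) hN).
rewrite [RHS](bigID (fun i : 'I_N => (i < size f)%N)) /=.
rewrite [X in _ = _ + X]big1 ?addr0 // => i.
by rewrite -leqNgt => h; rewrite nth_default // mul0r.
Qed.

Lemma LmomD f g : L (f + g) = L f + L g.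
Proof.
set N := maxn (size f) (size g).
rewrite (LmomE _ N (size_polyD f g)) (LmomE _ N (leq_maxl _ _))
  (LmomE _ N (leq_maxr _ _)) -big_split /=.
by apply: eq_bigr => i _; rewrite coefD mulrDl.
Qed.

Lemma LmomZ c f : L (c *: f) = c * L f.
Proof.
rewrite (LmomE _ (size f) (size_scale_leq _ _)) (LmomE _ _ (leqnn _)) mulr_sumr.
by apply: eq_bigr => i _; rewrite coefZ mulrA.
Qed.

Lemma LmomN f : L (- f) = - L f.
Proof. by rewrite -scaleN1r LmomZ mulN1r. Qed.

Lemma LmomB f g : L (f - g) = L f - L g.
Proof. by rewrite LmomD LmomN. Qed.

Lemma Lmom_sum n (F : 'I_n -> {poly R}) : L (\sum_(i < n) F i) = \sum_(i < n) L (F i).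
Proof.
elim/big_rec2: _ => [|i y f _ <-]; last by rewrite LmomD.
by rewrite /Lmom size_poly0 big_ord0.
Qed.

Lemma LmomXn m : L 'X^m = s m.
Proof.
rewrite (LmomE _ m.+1) ?size_polyXn // big_ord_recr /= coefXn eqxx mul1r.
by rewrite big1 ?add0r // => i _; rewrite coefXn (ltn_eqF (ltn_ord i)) mul0r.
Qed.

Lemma Lmom_MXn f k : L (f * 'X^k) = \sum_(j < size f) f`_j * s (j + k).
Proof.
rewrite -{1}(coefK f) poly_def mulr_suml Lmom_sum; apply: eq_bigr => j _.
by rewrite -scalerAl -exprD LmomZ LmomXn.
Qed.

Lemma size_leS0 (g : {poly R}) n : (size g <= n.+1)%N -> g`_n = 0 -> (size g <= n)%N.
Proof.
move=> h1 h2; rewrite leqNgt; apply/negP => h3.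
have E : size g = n.+1 by apply/eqP; rewrite eqn_leq h1 h3.
have : lead_coef g = 0 by rewrite lead_coefE E.
by move/eqP; rewrite lead_coef_eq0 => /eqP g0; move: E; rewrite g0 size_poly0.
Qed.

Lemma coefXsubCM (c : R) (f : {poly R}) i :
  (('X - c%:P) * f)`_i.+1 = f`_i - c * f`_i.+1.
Proof. by rewrite mulrBl coefB coefXM coefCM. Qed.

Lemma LmomXsubCM c f k :
  L (('X - c%:P) * f * 'X^k) = L (f * 'X^(k.+1)) - c * L (f * 'X^k).
Proof.
have -> : ('X - c%:P) * f * 'X^k = f * 'X^(k.+1) - c *: (f * 'X^k).
  by rewrite -mul_polyC exprS; ring.
by rewrite LmomB LmomZ.
Qed.

Variable t : nat -> {poly R}.
Hypothesis t_size : forall n, size (t n) = n.+1.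
Hypothesis t_lead : forall n, (t n)`_n = 1.
Hypothesis t_orth : forall n k, (k < n)%N -> L (t n * 'X^k) = 0.
Local Notation H n := (L (t n * 'X^n)).
Hypothesis t_H : forall n, H n != 0.
Local Notation e n := ((t n)`_(n.-1)).

Lemma t_hi n i : (n < i)%N -> (t n)`_i = 0.
Proof. by move=> h; rewrite nth_default // t_size. Qed.

Lemma kill m (g : {poly R}) : (size g <= m)%N -> (forall k, (k < m)%N -> L (g * 'X^k) = 0) -> g = 0.
Proof.
elim: m g => [|m IH] g hs ho.
  by apply/eqP; rewrite -size_poly_eq0 -leqn0.
set c := g`_m.
have hg' : g - c *: t m = 0.
  apply: IH.
    apply: size_leS0; last by rewrite coefB coefZ t_lead mulr1 subrr.
    apply: leq_trans (size_polyD _ _) _; rewrite size_polyN geq_max hs /=.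
    by apply: leq_trans (size_scale_leq _ _) _; rewrite t_size.
  move=> k hk; rewrite mulrBl LmomB -scalerAl LmomZ ho ?t_orth ?mulr0 ?subrr //.
  exact: ltnW.
move/eqP: hg'; rewrite subr_eq0 => /eqP hg.
have := ho m (ltnSn m); rewrite hg -scalerAl LmomZ => /eqP.
rewrite mulf_eq0 (negbTE (t_H m)) orbF => /eqP ->.
by rewrite scale0r.
Qed.

Lemma t_rec n :
  t n.+2 = ('X - (e n.+1 - e n.+2)%:P) * t n.+1 - (H n.+1 / H n) *: t n.
Proof.
set c := e n.+1 - e n.+2; set lam := H n.+1 / H n.
apply/eqP; rewrite eq_sym -subr_eq0; apply/eqP.
set d := _ - _.
apply: (kill n.+1).
  have hs : (size d <= n.+3)%N.
    apply: leq_trans (size_polyD _ _) _; rewrite size_polyN geq_max t_size leqnn andbT.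
    apply: leq_trans (size_polyD _ _) _; rewrite size_polyN geq_max.
    apply/andP; split.
      by apply: leq_trans (size_polyMleq _ _) _; rewrite size_XsubC t_size.
    by apply: leq_trans (size_scale_leq _ _) _; rewrite t_size; lia.
  apply: size_leS0; last first.
    rewrite /d !coefB coefXsubCM coefZ t_lead (t_hi n n.+1) // /c /=.
    by rewrite mulr0 subr0 mulr1; ring.
  apply: size_leS0 => //.
  rewrite /d !coefB coefXsubCM coefZ !t_lead (t_hi n.+1 n.+2) ?(t_hi n n.+2) //.
  by rewrite !mulr0 !subr0 subrr.
move=> k hk; rewrite /d mulrBl LmomB mulrBl LmomB LmomXsubCM -scalerAl LmomZ.
rewrite leq_eqVlt in hk; case/orP: hk => [/eqP [->]|hk].
  rewrite (t_orth n.+1 n (ltnSn n)) (t_orth n.+2 n (leqW (leqnn _))).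
  by rewrite /lam mulfVK ?t_H // mulr0 !subr0 subrr.
rewrite !t_orth; try lia.
by rewrite !mulr0 !subr0.
Qed.

Lemma t_one : t 1 = 'X - (- e 1)%:P.
Proof.
apply/polyP => i; rewrite coefB coefX coefC.
case: i => [|[|i]] /=.
- by rewrite sub0r opprK.
- by rewrite t_lead subr0.
- by rewrite t_hi // subrr.
Qed.

Lemma t_zero : t 0 = 1.
Proof.
apply/polyP => i; rewrite coefC; case: i => [|i] /=; first by rewrite t_lead.
by rewrite t_hi.
Qed.

Lemma ptilde_eq :
  ctilde p q 1 = - e 1 ->
  (forall n, ctilde p q n.+2 = e n.+1 - e n.+2) ->
  (forall n, lamtilde p q n.+2 = H n.+1 / H n) ->
  forall n, ptilde_rec p q n = t n.
Proof.
move=> c1 c2 l2.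
suff : forall n, ptilde_pair p q n = (t n, t n.+1) by move=> h n; rewrite /ptilde_rec h.
elim=> [|n IH].
  change (ptilde_pair p q 0) with (1 : {poly R}, 'X - (ctilde p q 1)%:P).
  by rewrite c1 t_zero -t_one.
change (ptilde_pair p q n.+1) with (let: (a,b) := ptilde_pair p q n in
  (b, ('X - (ctilde p q n.+2)%:P) * b - (lamtilde p q n.+2) *: a)).
by rewrite IH c2 l2 -t_rec.
Qed.

Variable P : nat -> {poly R}.
Hypothesis P_size : forall n, size (P n) = n.+1.
Hypothesis P_lead : forall n, 0 < lead_coef (P n).
Hypothesis P_orth : forall m n, L (P m * P n) = (m == n)%:R.

Lemma L0 : L 0 = 0.
Proof. by rewrite /Lmom size_poly0 big_ord0. Qed.

Lemma P_lc n : lead_coef (P n) = (P n)`_n.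
Proof. by rewrite lead_coefE P_size. Qed.

Lemma P_small N m (g : {poly R}) : (m <= N)%N -> (size g <= m)%N -> L (P N * g) = 0.
Proof.
elim: m g => [|m IH] g hm hs.
  by move: hs; rewrite leqn0 size_poly_eq0 => /eqP ->; rewrite mulr0 L0.
set c := g`_m / lead_coef (P m).
have hlc : lead_coef (P m) != 0 by rewrite gt_eqF.
have E : g = c *: P m + (g - c *: P m) by rewrite addrC subrK.
rewrite E mulrDr LmomD -scalerAr LmomZ P_orth.
have -> : (N == m) = false by apply/negbTE; rewrite neq_ltn hm orbT.
rewrite mulr0 add0r IH //; first exact: ltnW.
apply: size_leS0.
  apply: leq_trans (size_polyD _ _) _; rewrite size_polyN geq_max hs /=.
  by apply: leq_trans (size_scale_leq _ _) _; rewrite P_size.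
by rewrite coefB coefZ -P_lc /c mulfVK // subrr.
Qed.

Lemma P_unique n : (lead_coef (P n))^-1 *: P n = t n.
Proof.
have hlc : lead_coef (P n) != 0 by rewrite gt_eqF.
apply/eqP; rewrite -subr_eq0; apply/eqP; apply: (kill n).
  apply: size_leS0; last by rewrite coefB coefZ -P_lc mulVf // t_lead subrr.
  apply: leq_trans (size_polyD _ _) _; rewrite size_polyN geq_max t_size leqnn andbT.
  by apply: leq_trans (size_scale_leq _ _) _; rewrite P_size.
move=> k hk; rewrite mulrBl LmomB t_orth // subr0 -scalerAl LmomZ.
by rewrite (P_small n k.+1) ?mulr0 // size_polyXn.
Qed.

End Abs.

Section Conc.
Context {R : realType}.
Variables p q : R.
Hypotheses (q0 : 0 < q) (q1 : q < 1) (p0 : 0 <= p) (p1 : p < 1).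

Definition rho : R := q `^ (- (1 / 2)).

Lemma rho_gt0 : 0 < rho.
Proof. exact: powR_gt0. Qed.

Lemma powq_half k : q `^ (- (k%:R / 2)) = rho ^+ k.
Proof.
rewrite -powR_mulrn ?ltW ?rho_gt0 // /rho -powRrM; congr (_ `^ _).
by rewrite mulNr mul1r mulrC.
Qed.

Lemma rho2 : rho ^+ 2 = q^-1.
Proof.
rewrite -powq_half /= -[2%:R / 2]/(2%:R / 2) divff ?pnatr_eq0 //.
by rewrite powRN powRr1 // ltW.
Qed.

Definition z (j : nat) : R := (q ^+ j)^-1.

Lemma qj_neq0 j : q ^+ j != 0.
Proof. by rewrite expf_neq0 // gt_eqF. Qed.

Lemma rho2n n : rho ^+ (2 * n) = z n.
Proof. by rewrite exprM rho2 exprVn. Qed.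

Lemma zK j : q ^+ j * z j = 1.
Proof. by rewrite /z divff ?qj_neq0. Qed.

Lemma z_ge1 j : 1 <= z j.
Proof.
rewrite /z invr_ge1 ?exprn_ile1 ?ltW //; first by rewrite unitfE qj_neq0.
by rewrite exprn_gt0.
Qed.

Lemma zp_gt0 j : 0 < z j - p.
Proof. by rewrite subr_gt0 (lt_le_trans p1) // z_ge1. Qed.

Definition mu (j : nat) : R := qpoch p q j * rho ^+ ((j.+1) ^ 2).

Lemma mu_gt0 j : 0 < mu j.
Proof.
rewrite /mu mulr_gt0 ?exprn_gt0 ?rho_gt0 //; apply: qpoch_gt0.
  by rewrite p0 p1.
by rewrite !ltW.
Qed.

Lemma stildeS j : stilde p q j.+1 = mu j.+1.
Proof. by rewrite /stilde /mu powq_half. Qed.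

Lemma stilde0 : stilde p q 0 = mu 0 - rho * (V q 1 / U p q 1).
Proof.
rewrite /stilde /mu qpoch0 mul1r expr1 -/rho /V /U expr1.
by rewrite /rho div1r; ring.
Qed.


Definition Qp (n : nat) : {poly R} := \prod_(i < n) (1 - (q ^+ i) *: 'X).
Definition cc n j := (Qp n)`_j.
Definition K n := (Qp n).[z n].

Lemma QpS n : Qp n.+1 = Qp n - q ^+ n *: (Qp n * 'X).
Proof. by rewrite /Qp big_ord_recr /= mulrBr mulr1 -scalerAr. Qed.

Lemma Qp_size n : (size (Qp n) <= n.+1)%N.
Proof.
elim: n => [|n IH]; first by rewrite /Qp big_ord0 size_poly1.
rewrite QpS; apply: leq_trans (size_polyD _ _) _; rewrite size_polyN geq_max.
rewrite (leq_trans IH) //=.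
apply: leq_trans (size_scale_leq _ _) _.
apply: leq_trans (size_polyMleq _ _) _; rewrite size_polyX; lia.
Qed.

Lemma Qp_horner n x : (Qp n).[x] = \prod_(i < n) (1 - q ^+ i * x).
Proof. by rewrite /Qp horner_prod; apply: eq_bigr => i _; rewrite !hornerE. Qed.

Lemma cc0 n : cc n 0 = 1.
Proof. by rewrite /cc -horner_coef0 Qp_horner; apply: big1 => i _; rewrite mulr0 subr0. Qed.

Lemma cc_hi n j : (n < j)%N -> cc n j = 0.
Proof. by move=> h; rewrite /cc nth_default // (leq_trans (Qp_size n)). Qed.

Lemma ccS n i : cc n.+1 i.+1 = cc n i.+1 - q ^+ n * cc n i.
Proof. by rewrite /cc QpS coefB coefZ coefMX. Qed.

Lemma cc_top n : cc n n = \prod_(i < n) (- q ^+ i).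
Proof.
elim: n => [|n IH]; first by rewrite cc0 big_ord0.
by rewrite ccS cc_hi // IH big_ord_recr /= sub0r; ring.
Qed.

Lemma cc_top_neq0 n : cc n n != 0.
Proof. by rewrite cc_top; apply/prodf_neq0 => i _; rewrite oppr_eq0 qj_neq0. Qed.

Lemma cc_sub n : cc n.+1 n = - cc n.+1 n.+1 * \sum_(i < n.+1) z i.
Proof.
elim: n => [|n IH].
  by rewrite cc0 ccS cc0 (cc_hi 0 1) // big_ord1 /z expr0 invr1; ring.
rewrite ccS IH [cc n.+2 n.+2]ccS (cc_hi n.+1 n.+2) // (big_ord_recr n.+1) /=.
have := zK n.+1; set c := cc n.+1 n.+1; set S := \sum_(i < n.+1) z i => hz.
rewrite sub0r -mulNr opprK; transitivity (c + q ^+ n.+1 * c * S); first by ring.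
rewrite mulrDr addrC; congr (_ + _); by rewrite mulrAC hz mul1r.
Qed.

Lemma sum_cc_horner n (f : {poly R}) : (size f <= n.+1)%N ->
  \sum_(j < n.+1) cc n j * f.[z j] = f`_n * K n.
Proof.
move=> hf.
under eq_bigr do rewrite (horner_coef_wide _ hf) mulr_sumr.
rewrite exchange_big /=.
transitivity (\sum_(m < n.+1) f`_m * (Qp n).[z m]).
  apply: eq_bigr => m _; rewrite (horner_coef_wide _ (Qp_size n)) mulr_sumr.
  apply: eq_bigr => j _; rewrite /z /cc !exprVn -!exprM mulnC; ring.
rewrite big_ord_recr /= big1 ?add0r // => -[m hm] _ /=.
by rewrite Qp_horner (bigD1 (Ordinal hm)) //= zK subrr mul0r mulr0.
Qed.

Definition hp n := \prod_(i < n.+1) (p - z i).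

Lemma hp_neq0 n : hp n != 0.
Proof. by apply/prodf_neq0 => i _; rewrite -oppr_eq0 opprB gt_eqF // zp_gt0. Qed.

Lemma zp_neq0 j : z j - p != 0.
Proof. by rewrite gt_eqF // zp_gt0. Qed.

Lemma sum_cc_inv n : \sum_(j < n.+1) cc n j / (z j - p) = - K n / hp n.
Proof.
set h := \prod_(i < n.+1) ('X - (z i)%:P).
have hr : root (h - (h.[p])%:P) p by rewrite /root hornerD hornerN hornerC subrr.
case/factor_theorem: hr => g hg.
have hhp : h.[p] = hp n.
  by rewrite /h horner_prod; apply: eq_bigr => i _; rewrite hornerXsubC.
have hzj (j : 'I_n.+1) : g.[z j] * (z j - p) = - hp n.
  have := congr1 (fun P => P.[z j]) hg; rewrite /= hornerM hornerXsubC => <-.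
  rewrite hornerD hornerN hornerC hhp /h horner_prod (bigD1 j) //=.
  by rewrite hornerXsubC subrr mul0r sub0r.
have hsh : size h = n.+2 by rewrite /h size_prod_XsubC [index_enum _]unlock -enumT size_enum_ord.
have hsc : size (h - (h.[p])%:P) = n.+2.
  by rewrite size_polyDl hsh // size_polyN size_polyC; case: (_ != 0).
have hmon : h \is monic by apply: monic_prod_XsubC.
have hl : lead_coef (h - (h.[p])%:P) = 1.
  rewrite lead_coefDl ?(monicP hmon) // hsh size_polyN size_polyC; by case: (_ != 0).
have gn0 : g != 0 by apply/eqP => g0; move: hsc; rewrite hg g0 mul0r size_poly0.
have hsg : size g = n.+1.
  by move: hsc; rewrite hg size_Mmonic ?monicXsubC // size_XsubC addn2 => -[].
have hgl : g`_n = 1.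
  by move: hl; rewrite hg lead_coef_Mmonic ?monicXsubC // lead_coefE hsg.
have gsize : (size g <= n.+1)%N by rewrite hsg.
transitivity (\sum_(j < n.+1) cc n j * g.[z j] * (- (hp n)^-1)).
  apply: eq_bigr => j _; rewrite -mulrA; congr (_ * _).
  apply: (mulIf (zp_neq0 j)); rewrite mulVf ?zp_neq0 // mulrAC hzj.
  by rewrite mulrN mulNr opprK divff ?hp_neq0.
by rewrite -mulr_suml sum_cc_horner // hgl mul1r mulrN mulNr.
Qed.

Lemma K_rev n : K n = \prod_(i < n) (1 - z i.+1).
Proof.
rewrite /K Qp_horner (reindex_inj rev_ord_inj) /=; apply: eq_bigr => i _.
congr (1 - _); rewrite /z.
have -> : q ^+ n = q ^+ (n - i.+1) * q ^+ i.+1 by rewrite -exprD subnK.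
by rewrite invfM mulrA divff ?qj_neq0 // mul1r.
Qed.

Lemma prod_zz n : \prod_(i < n) (z i * z i.+1) = rho ^+ (2 * n ^ 2).
Proof.
elim: n => [|n IH]; first by rewrite big_ord0 expr0.
rewrite big_ord_recr /= IH -!rho2n -!exprD; congr (_ ^+ _).
rewrite !expnSr !expn0 !mul1n; lia.
Qed.

Lemma K_cc n : K n = cc n n * rho ^+ (2 * n ^ 2) * qpoch q q n.
Proof.
rewrite K_rev cc_top -prod_zz /qpoch -!big_split /=; apply: eq_bigr => i _.
rewrite /z exprS; have := qj_neq0 i; set x := q ^+ i => hx.
have qn0 : q != 0 by rewrite gt_eqF.
by field; rewrite hx qn0.
Qed.

Lemma K_neq0 n : K n != 0.
Proof.
rewrite K_cc !mulf_neq0 ?cc_top_neq0 ?expf_neq0 ?gt_eqF ?rho_gt0 //.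
by apply: qpoch_gt0; rewrite ?q0 ?q1 ?ltW.
Qed.

Lemma hp_eq n : hp n = (p - 1) * \prod_(i < n) (p - z i.+1).
Proof. by rewrite /hp big_ord_recl /z expr0 invr1. Qed.

Lemma K_ratio n : K n * qpoch (p * q) q n = \prod_(i < n) (p - z i.+1) * qpoch q q n.
Proof.
rewrite K_rev /qpoch -!big_split /=; apply: eq_bigr => i _.
rewrite /z exprS; have := qj_neq0 i; set x := q ^+ i => hx.
have qn0 : q != 0 by rewrite gt_eqF.
by field; rewrite hx qn0.
Qed.

Lemma hq : 0 <= q <= 1. Proof. by apply: hq01. Qed.
Lemma Ush m : U p q m = (1 - p * q ^+ m) * U p q m.+1. Proof. by apply: U_shift. Qed.
Lemma Vsh m : V q m = (1 - q ^+ m) * V q m.+1. Proof. by apply: V_shift. Qed.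
Lemma V0' : V q 0 = 0. Proof. by apply: V0. Qed.
Lemma Ugt0 m : 0 < U p q m. Proof. by apply: U_gt0. Qed.
Lemma Vgt0 m : 0 < V q m.+1. Proof. by apply: V_gt0. Qed.
Lemma Dgt0 m : 0 < Delta p q m. Proof. by apply: Delta_gt0. Qed.
Lemma Dneq0 m : Delta p q m != 0. Proof. by rewrite gt_eqF ?Dgt0. Qed.
Lemma Uneq0 m : U p q m != 0. Proof. by rewrite gt_eqF ?Ugt0. Qed.
Lemma Vneq0 m : V q m.+1 != 0. Proof. by rewrite gt_eqF ?Vgt0. Qed.
Lemma DeltaE m : Delta p q m = U p q m - V q m. Proof. by []. Qed.

Lemma V1_eq n : V q 1 = qpoch q q n * V q n.+1.
Proof.
rewrite /V expr1 (qpoch_inf_shiftn _ _ n _ hq) ?exprS //.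
by rewrite ltW // (ltW q1).
Qed.

Lemma U1_eq n : U p q 1 = qpoch (p * q) q n * U p q n.+1.
Proof.
have h : 0 <= p * q ^+ 1 <= 1 by apply: pqm01.
rewrite expr1 in h.
by rewrite /U expr1 (qpoch_inf_shiftn _ _ n h hq) exprS mulrA.
Qed.

Definition AA n := V q n.+1 - p * U p q n.+1.
Definition BB n := U p q n.+1 - V q n.+1.
Definition bb n j := cc n j * (AA n + BB n * z j) / (z j - p).
Definition aa n j := bb n j / mu j.
Definition tpoly n : {poly R} := \poly_(j < n.+1) aa n j.
Definition tt n : {poly R} := if n is 0 then 1 else (aa n n)^-1 *: tpoly n.

Lemma qn0 : q != 0. Proof. by rewrite gt_eqF. Qed.
Lemma rhon0 : rho != 0. Proof. by rewrite gt_eqF ?rho_gt0. Qed.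
Lemma mun0 j : mu j != 0. Proof. by rewrite gt_eqF ?mu_gt0. Qed.

Lemma AB_z n : AA n + BB n * z n = z n * Delta p q n.
Proof.
rewrite /AA /BB DeltaE [U p q n]Ush [V q n]Vsh /z.
have := qj_neq0 n; set x := q ^+ n => hx.
by field.
Qed.

Lemma aann_neq0 n : aa n n != 0.
Proof.
rewrite /aa /bb AB_z !mulf_neq0 ?invr_neq0 ?cc_top_neq0 ?zp_neq0 ?mun0 ?Dneq0 //.
exact: qj_neq0.
Qed.

Lemma tt_size n : size (tt n) = n.+1.
Proof.
case: n => [|n]; first by rewrite /= size_poly1.
by rewrite /tt size_scale ?invr_neq0 ?aann_neq0 // size_poly_eq // aann_neq0.
Qed.

Lemma tt_lead n : (tt n)`_n = 1.
Proof.
case: n => [|n]; first by rewrite /= coefC.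
by rewrite /tt coefZ coef_poly ltnSn mulVf ?aann_neq0.
Qed.

Lemma muS m : mu m.+1 = mu m * (1 - p * q ^+ m) * rho ^+ (2 * m + 3).
Proof.
rewrite /mu qpochS.
have -> : ((m.+2) ^ 2 = (m.+1) ^ 2 + (2 * m + 3))%N.
  by rewrite !expnSr !expn0 !mul1n; lia.
by rewrite exprD; ring.
Qed.

Lemma mu_shift j k : mu (j + k) =
  mu j * rho ^+ (2 * k + k ^ 2) * \prod_(i < k) (z j - p * q ^+ i).
Proof.
elim: k => [|k IH]; first by rewrite addn0 big_ord0 /= expr0 !mulr1.
rewrite addnS muS IH big_ord_recr /=.
have -> : (2 * k.+1 + k.+1 ^ 2 = (2 * k + k ^ 2) + (2 * k + 3))%N.
  by rewrite !expnSr !expn0 !mul1n; lia.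
have -> : (2 * (j + k) + 3 = 2 * j + (2 * k + 3))%N by lia.
rewrite [rho ^+ (2 * j + _)]exprD rho2n [rho ^+ (_ + (2 * k + 3))]exprD [q ^+ (j + k)]exprD.
have := zK j; set y := z j; set x := q ^+ j => hxy.
set P := \prod_(i < k) _; set r1 := rho ^+ (2 * k + k ^ 2); set r2 := rho ^+ (2 * k + 3).
transitivity (mu j * r1 * P * r2 * (y - p * q ^+ k * (x * y))); first by ring.
by rewrite hxy mulr1; ring.
Qed.

Lemma Lmom_poly (E : nat -> R) N k :
  Lmom p q (\poly_(j < N) E j * 'X^k) = \sum_(j < N) E j * stilde p q (j + k).
Proof.
rewrite poly_def mulr_suml Lmom_sum; apply: eq_bigr => j _.
by rewrite -scalerAl -exprD LmomZ LmomXn.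
Qed.

Definition FF n k : {poly R} :=
  ((AA n)%:P + BB n *: 'X) * \prod_(i < k) ('X - (p * q ^+ i.+1)%:P).

Lemma FF_size n k : (size (FF n k) <= k.+2)%N.
Proof.
apply: leq_trans (size_polyMleq _ _) _.
rewrite size_prod_XsubC [index_enum _]unlock -enumT size_enum_ord.
have : (size ((AA n)%:P + BB n *: 'X)%R <= 2)%N.
  apply: leq_trans (size_polyD _ _) _; rewrite geq_max size_polyC.
  apply/andP; split; first by case: (_ != 0).
  by apply: leq_trans (size_scale_leq _ _) _; rewrite size_polyX.
lia.
Qed.

Lemma FF_top n k : (FF n k)`_k.+1 = BB n.
Proof.
set M := \prod_(i < k) ('X - (p * q ^+ i.+1)%:P).
have hM : size M = k.+1 by rewrite size_prod_XsubC [index_enum _]unlock -enumT size_enum_ord.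
have hl : M`_k = 1 by have := monic_prod_XsubC (index_enum 'I_k) predT (fun i : 'I_k => p * q ^+ i.+1); move/monicP; rewrite lead_coefE hM.
rewrite /FF -/M mulrDl coefD coefCM -scalerAl coefZ coefXM /= hl mulr1.
by rewrite nth_default ?hM // mulr0 add0r.
Qed.

Lemma bb_prod n j k : bb n j * \prod_(i < k.+1) (z j - p * q ^+ i) = cc n j * (FF n k).[z j].
Proof.
rewrite big_ord_recl /= expr0 mulr1 /bb /FF hornerM horner_prod !hornerE.
have := zp_neq0 j => hz.
set P1 := \prod_(i < k) _; set P2 := \prod_(i < k) _.
have -> : P1 = P2 by apply: eq_bigr => i _; rewrite !hornerE.
by rewrite /= divfK.
Qed.

Lemma tt_Lmom_pos n k : (0 < n)%N -> (k.+1 < n)%N ->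
  Lmom p q (tt n * 'X^(k.+1)) = 0.
Proof.
case: n => [//|n] _ hk.
rewrite /tt -scalerAl LmomZ Lmom_poly.
transitivity ((aa n.+1 n.+1)^-1 * (rho ^+ (2 * k.+1 + k.+1 ^ 2) *
   \sum_(j < n.+2) cc n.+1 j * (FF n.+1 k).[z j])).
  congr (_ * _); rewrite mulr_sumr; apply: eq_bigr => j _.
  rewrite addnS stildeS -addnS mu_shift /aa -bb_prod; field; exact: mun0.
have hs : (size (FF n.+1 k) <= n.+1)%N by rewrite (leq_trans (FF_size _ _)).
rewrite sum_cc_horner; last by rewrite (leq_trans hs).
by rewrite (nth_default _ hs) mul0r mulr0 mulr0.
Qed.

Lemma tt_H_pos n : Lmom p q (tt n.+1 * 'X^(n.+1)) =
  (aa n.+1 n.+1)^-1 * (rho ^+ (2 * n.+1 + n.+1 ^ 2) * (BB n.+1 * K n.+1)).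
Proof.
rewrite /tt -scalerAl LmomZ Lmom_poly.
congr (_ * _).
transitivity (rho ^+ (2 * n.+1 + n.+1 ^ 2) *
   \sum_(j < n.+2) cc n.+1 j * (FF n.+1 n).[z j]).
  rewrite mulr_sumr; apply: eq_bigr => j _.
  rewrite addnS stildeS -addnS mu_shift /aa -bb_prod; field; exact: mun0.
by rewrite sum_cc_horner ?FF_top // FF_size.
Qed.

Lemma sum_cc0 n : (0 < n)%N -> \sum_(j < n.+1) cc n j = 0.
Proof.
move=> hn; have := sum_cc_horner n (1 : {poly R}); rewrite size_poly1 => /(_ isT).
under eq_bigr do rewrite hornerE mulr1.
by rewrite coefC (negbTE (lt0n_neq0 hn)) mul0r.
Qed.

Lemma sum_bb n : (0 < n)%N ->
  \sum_(j < n.+1) bb n j = (AA n + BB n * p) * (- K n / hp n).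
Proof.
move=> hn.
transitivity (\sum_(j < n.+1) (BB n * cc n j + (AA n + BB n * p) * (cc n j / (z j - p)))).
  apply: eq_bigr => j _; rewrite /bb; have := zp_neq0 j => hz; by field.
by rewrite big_split /= -!mulr_sumr sum_cc0 // mulr0 add0r sum_cc_inv.
Qed.

Lemma mu0 : mu 0 = rho.
Proof. by rewrite /mu qpoch0 mul1r expr1. Qed.

Lemma tt_Lmom0 n : (0 < n)%N -> Lmom p q (tt n * 'X^0) = 0.
Proof.
case: n => [//|n] _.
rewrite /tt -scalerAl LmomZ Lmom_poly.
have -> : \sum_(j < n.+2) aa n.+1 j * stilde p q (j + 0) =
    \sum_(j < n.+2) bb n.+1 j - bb n.+1 0 * (V q 1 / U p q 1).
  rewrite big_ord_recl [in RHS]big_ord_recl.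
  have -> : \sum_(i < n.+1) aa n.+1 (lift ord0 i) * stilde p q (lift ord0 i + 0) =
     \sum_(i < n.+1) bb n.+1 (lift ord0 i).
    apply: eq_bigr => i _; rewrite lift0 addn0 stildeS /aa.
    by rewrite divfK ?mun0.
  rewrite (_ : stilde p q (ord0 + 0) = stilde p q 0) // stilde0 mu0.
  rewrite /aa mu0; have := rhon0 => hr; field.
  by rewrite hr Uneq0.
rewrite sum_bb // /bb cc0 /z expr0 invr1 mul1r.
rewrite hp_eq (V1_eq n.+1) (U1_eq n.+1).
have KR := K_ratio n.+1.
set Pz := \prod_(i < n.+1) _ in KR *.
have hPz : Pz != 0.
  by apply/prodf_neq0 => i _; rewrite -oppr_eq0 opprB gt_eqF // zp_gt0.
have hQ : qpoch (p * q) q n.+1 != 0.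
  rewrite gt_eqF // qpoch_gt0 //; last by rewrite ltW // ltW.
  apply/andP; split; first by rewrite mulr_ge0 // ltW.
  by apply: (le_lt_trans _ p1); rewrite ler_piMr // ltW.
have hK : K n.+1 = Pz * qpoch q q n.+1 / qpoch (p * q) q n.+1.
  by rewrite -KR mulfK.
rewrite hK /AA /BB.
have hp1 : p - 1 != 0 by rewrite subr_eq0 lt_eqF.
have hp1' : 1 - p != 0 by rewrite subr_eq0 gt_eqF.
have := Uneq0 n.+2; have := Vneq0 n.+1 => hV hU.
have hQq : qpoch q q n.+1 != 0.
  by rewrite gt_eqF // qpoch_gt0 // ?q0 ?q1 // ltW // ltW.
field; by rewrite hU hQ hp1 hp1' hPz aann_neq0.
Qed.

Lemma tt_orth n k : (k < n)%N -> Lmom p q (tt n * 'X^k) = 0.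
Proof.
case: k => [|k] hk; first exact: tt_Lmom0.
by apply: tt_Lmom_pos => //; apply: leq_ltn_trans hk.
Qed.

Definition Hc n := Delta p q n.+1 / Delta p q n * qpoch q q n * qpoch p q n.+1 *
  rho ^+ (4 * n ^ 2 + 4 * n + 1).

Lemma qpp_neq0 n : qpoch p q n != 0.
Proof. by rewrite gt_eqF // qpoch_gt0 // ?p0 ?p1 // ltW // ltW. Qed.

Lemma qqq_neq0 n : qpoch q q n != 0.
Proof. by rewrite gt_eqF // qpoch_gt0 // ?q1 ltW // ltW. Qed.

Lemma pqm_neq0 m : 1 - p * q ^+ m != 0.
Proof.
rewrite subr_eq0 gt_eqF // (le_lt_trans _ p1) // ler_piMr // exprn_ile1 //.
  exact: ltW.
exact: ltW.
Qed.

Lemma tt_H n : Lmom p q (tt n * 'X^n) = Hc n.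
Proof.
case: n => [|n].
  rewrite /tt mul1r LmomXn stilde0 mu0 /Hc qpoch0 !DeltaE V0' [U p q 0]Ush.
  rewrite qpochS qpoch0 !expr0 !mulr1 subr0.
  have -> : (4 * 0 ^ 2 + 4 * 0 + 1 = 1)%N by [].
  have hp1' : 1 - p != 0 by rewrite subr_eq0 gt_eqF.
  have := Uneq0 1 => hU.
  by rewrite expr1; field; rewrite hU hp1'.
rewrite tt_H_pos /aa /bb AB_z K_cc /mu /Hc [qpoch p q n.+2]qpochS /BB -DeltaE.
have -> : rho ^+ (4 * n.+1 ^ 2 + 4 * n.+1 + 1) =
   rho ^+ (2 * n.+1 + n.+1 ^ 2) * rho ^+ (2 * n.+1 ^ 2) * rho ^+ (n.+2 ^ 2).
  rewrite -!exprD; congr (_ ^+ _); rewrite !expnSr !expn0 !mul1n; lia.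
have := zp_neq0 n.+1; rewrite /z.
have := qj_neq0 n.+1; set x := q ^+ n.+1 => hx hz.
have := Dneq0 n.+1; have := cc_top_neq0 n.+1; have := qpp_neq0 n.+1.
have := rhon0 => hr hQ hc hD.
have hpx : 1 - p * x != 0 by exact: pqm_neq0.
field; by rewrite mulNr hD hQ hx hc hpx expf_neq0.
Qed.

Definition Gf k := ((1 - q ^+ k) * U p q k.-1 - (1 - p * q ^+ k) * V q k.-1) *
  (rho ^+ (4 * k).-1 / ((1 - q) * Delta p q k)).

Lemma S_eq m : (\sum_(i < m.+1) z i) * (1 - q) = (1 - q ^+ m.+1) * z m.
Proof.
elim: m => [|m IH]; first by rewrite big_ord1 expr1 mulrC.
rewrite big_ord_recr /= mulrDl IH /z !exprS.
have := qj_neq0 m; set x := q ^+ m => hx.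
have := qn0 => hq0.
field; by rewrite hx hq0.
Qed.

Lemma tt_e m : (tt m.+1)`_m = - Gf m.+1.
Proof.
rewrite /tt coefZ coef_poly (ltnW (ltnSn m.+1)) /aa /bb cc_sub AB_z muS.
have hq1 : 1 - q != 0 by rewrite subr_eq0 gt_eqF.
have HS : \sum_(i < m.+1) z i = (1 - q ^+ m.+1) * z m / (1 - q).
  by rewrite -S_eq mulfK.
rewrite HS /Gf (_ : m.+1.-1 = m) //.
rewrite [U p q m]Ush [U p q m.+1]Ush [V q m]Vsh [V q m.+1]Vsh /AA /BB.
have -> : ((4 * m.+1).-1 = 2 * (2 * m) + 3)%N by lia.
rewrite [rho ^+ (2 * (2 * m) + 3)]exprD [rho ^+ (2 * m + 3)]exprD !rho2n.
have -> : z (2 * m) = z m ^+ 2 by rewrite /z mulnC exprM exprVn.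
have hz0 := zp_neq0 m; have hz1 := zp_neq0 m.+1.
have hD := Dneq0 m.+1; have hc := cc_top_neq0 m.+1; have hmu := mun0 m.
have hr3 : rho ^+ 3 != 0 by rewrite expf_neq0 // rhon0.
have hpx := pqm_neq0 m; have hq0 := qn0; have hx := qj_neq0 m.
have hpx1 := pqm_neq0 m.+1.
move: hz0 hz1 hpx hx hpx1; rewrite /z [q ^+ m.+1]exprS.
set x := q ^+ m; set c := cc _ _; set D := Delta _ _ _; set M := mu m.
set u := U p q m.+2; set v := V q m.+2; set r := rho ^+ 3 => hz0 hz1 hpx hx hpx1.
field; by rewrite !mulNr hD hq1 hx hmu hpx hr3 hq0 hpx1 hc.
Qed.

Lemma c1_eq : ctilde p q 1 = Gf 1.
Proof.
change (ctilde p q 1) with (qpoch_inf p q / Delta p q 1 * q `^ (- (3 / 2))).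
rewrite /Gf V0' powq_half.
rewrite (_ : qpoch_inf p q = U p q 0); last by rewrite /U expr0 mulr1.
rewrite (_ : (4 * 1).-1 = 3)%N // expr1 mulr0 subr0.
have hq1 : 1 - q != 0 by rewrite subr_eq0 gt_eqF.
have := Dneq0 1 => hD.
by field; rewrite hq1 hD.
Qed.

Lemma powq_e1 n : q `^ (- (2 * n.+1)%:R - 3 / 2) = rho ^+ (4 * n.+2).-1.
Proof.
rewrite -powq_half; congr (q `^ _).
have -> : (4 * n.+2).-1 = (4 * n + 7)%N by lia.
have -> : (2 * n.+1 = 2 * n + 2)%N by lia.
rewrite !natrD ?natrM; lra.
Qed.

Lemma powq_e2 n : q `^ (- (2 * n.+1)%:R + 1 / 2) = rho ^+ (4 * n.+1).-1.
Proof.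
rewrite -powq_half; congr (q `^ _).
have -> : (4 * n.+1).-1 = (4 * n + 3)%N by lia.
have -> : (2 * n.+1 = 2 * n + 2)%N by lia.
rewrite !natrD ?natrM; lra.
Qed.

Lemma c2_eq n : ctilde p q n.+2 = Gf n.+2 - Gf n.+1.
Proof.
change (ctilde p q n.+2) with (
  ((1 - q ^+ n.+2) * qpoch_inf (p * q ^+ n.+1) q
         - (1 - p * q ^+ n.+2) * qpoch_inf (q ^+ n.+1) q)
        * (q `^ (- (2 * n.+1)%:R - 3 / 2) / ((1 - q) * Delta p q n.+2))
      - ((1 - q ^+ n.+1) * qpoch_inf (p * q ^+ n.+1.-1) q
         - (1 - p * q ^+ n.+1) * qpoch_inf (q ^+ n.+1.-1) q)
        * (q `^ (- (2 * n.+1)%:R + 1 / 2) / ((1 - q) * Delta p q n.+1))).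
by rewrite powq_e1 powq_e2.
Qed.

Lemma l2_eq n : lamtilde p q n.+2 = Hc n.+1 / Hc n.
Proof.
change (lamtilde p q n.+2) with (Delta p q n * Delta p q n.+2 / (Delta p q n.+1) ^+ 2
             * (1 - q ^+ n.+1) * (1 - p * q ^+ n.+1) * q ^- (4 * n.+1)).
rewrite /Hc [qpoch q q n.+1]qpochS [qpoch p q n.+2]qpochS.
have -> : rho ^+ (4 * n.+1 ^ 2 + 4 * n.+1 + 1) =
   rho ^+ (4 * n ^ 2 + 4 * n + 1) * rho ^+ (2 * (4 * n.+1)).
  rewrite -exprD; congr (_ ^+ _); rewrite !expnSr !expn0 !mul1n; lia.
rewrite rho2n /z -exprS.
have := Dneq0 n; have := Dneq0 n.+1; have := Dneq0 n.+2 => h2 h1 h0.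
have := qqq_neq0 n; have := qpp_neq0 n.+1 => hP hQ.
have hr : rho ^+ (4 * n ^ 2 + 4 * n + 1) != 0 by rewrite expf_neq0 // rhon0.
have hx := qj_neq0 (4 * n.+1).
have hpx := pqm_neq0 n.+1.
have hq1 : 1 - q ^+ n.+1 != 0.
  by rewrite subr_eq0 eq_sym lt_eqF // expr_lt1 // ltW.
by field; rewrite ?h0 ?h1 ?h2 ?hP ?hQ ?hr ?hx ?hpx ?hq1.
Qed.

End Conc.

Lemma Hc_neq0 {R : realType} (p q : R) : 0 < q -> q < 1 -> 0 <= p -> p < 1 ->
  forall n, Hc p q n != 0.
Proof.
move=> q0 q1 p0 p1 n.
rewrite /Hc !mulf_neq0 ?invr_neq0 ?expf_neq0 //.
- by apply: Dneq0.
- by apply: Dneq0.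
- by apply: qqq_neq0.
- by apply: qpp_neq0.
- by apply: rhon0.
Qed.

Theorem theorem5 (R : realType) (p q : R) :
  0 < q -> q < 1 -> 0 <= p -> p < 1 ->
  forall P : nat -> {poly R},
    (forall n, size (P n) = n.+1) ->
    (forall n, 0 < lead_coef (P n)) ->
    (forall m n, Lmom p q (P m * P n) = (m == n)%:R) ->
    forall n, (lead_coef (P n))^-1 *: P n = ptilde_rec p q n.
Proof.
move=> q0 q1 p0 p1 P Ps Pl Po n.
have ts : forall k, size (tt p q k) = k.+1 by move=> k; apply: tt_size.
have tl : forall k, (tt p q k)`_k = 1 by move=> k; apply: tt_lead.
have to : forall k j, (j < k)%N -> Lmom p q (tt p q k * 'X^j) = 0.
  by move=> k j hj; apply: tt_orth.
have tH : forall k, Lmom p q (tt p q k * 'X^k) != 0.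
  by move=> k; rewrite tt_H //; apply: Hc_neq0.
have c1 : ctilde p q 1 = - (tt p q 1)`_0.
  by rewrite c1_eq // tt_e // opprK.
have c2 : forall k, ctilde p q k.+2 = (tt p q k.+1)`_k - (tt p q k.+2)`_k.+1.
  by move=> k; rewrite c2_eq // !tt_e // opprK addrC.
have l2 : forall k, lamtilde p q k.+2 =
    Lmom p q (tt p q k.+1 * 'X^(k.+1)) / Lmom p q (tt p q k * 'X^k).
  by move=> k; rewrite !tt_H // l2_eq.
rewrite (P_unique p q (tt p q) ts tl to tH P Ps Pl Po n).
by rewrite (ptilde_eq p q (tt p q) ts tl to tH c1 c2 l2 n).
Qed.
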